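(* Let $\Gamma$ be a second countable locally compact abelian group, $n\ge2$, and $\omega\in\Gamma^n$ such that $K\omega_1=0$ for some positive integer $K$ and $-\omega_j\notin\Omega_{\{1\}}$ for every $j\ne1$. Let $\Omega=\{\omega_\mu:\mu\text{ a word}\}$. Then for every $\gamma\in\Gamma$ there is a neighborhood $U$ of $\gamma$ with $(U\setminus\{\gamma\})\cap\Omega=\emptyset$.
   Context: Words are finite sequences $\mu=(i_1,\ldots,i_k)$ in $\{1,\ldots,n\}$ including the empty word, and $\omega_\mu=\sum_j\omega_{i_j}$, so $\Omega$ is the (algebraic) semigroup generated by $\omega_1,\ldots,\omega_n$ together with $0$. $\Omega_{\{1\}}$ is the closed subsemigroup of $\Gamma$ generated by $\omega_1,\ldots,\omega_n$ and $-\omega_1$. *)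

(* Defs.v *)
From HB Require Import structures.
From mathcomp Require Import all_boot all_order all_algebra.
From mathcomp Require Import all_classical all_reals all_analysis.
Set Implicit Arguments. Unset Strict Implicit. Unset Printing Implicit Defensive.
Import Order.TTheory GRing.Theory Num.Theory.
Local Open Scope classical_set_scope.
Local Open Scope ring_scope.

(* omega : 'I_n -> G plays the role of (omega_1, ..., omega_n) in Gamma^n.
   A word mu is a finite sequence of indices; omega_mu = sum_j omega_(i_j). *)
Definition word_sum (G : zmodType) (n : nat) (omega : 'I_n -> G)
  (mu : seq 'I_n) : G := \sum_(i <- mu) omega i.

Definition Omega (G : zmodType) (n : nat) (omega : 'I_n -> G) : set G :=
  [set x | exists mu : seq 'I_n, x = word_sum omega mu].

Definition closed_subsemigroup_gen (G : topologicalZmodType) (A : set G)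
  : set G :=
  \bigcap_(S in [set S : set G | [/\ closed S, A `<=` S &
                   forall x y, S x -> S y -> S (x + y)]]) S.

(* Omega_{1}: closed subsemigroup generated by omega_1..omega_n and -omega_1,
   where i1 is the index playing the role of 1. *)
Definition Omega1 (G : topologicalZmodType) (n : nat) (omega : 'I_n -> G)
  (i1 : 'I_n) : set G :=
  closed_subsemigroup_gen (range omega `|` [set - omega i1]).

(* Main.v *)
Require Import Defs.
From HB Require Import structures.
From mathcomp Require Import all_boot all_order all_algebra.
From mathcomp Require Import zify.
From mathcomp Require Import all_classical all_reals all_analysis.
Import Order.TTheory GRing.Theory Num.Theory.
Local Open Scope classical_set_scope.
Local Open Scope ring_scope.
Lemma fin_bound (T : finType) (P : T -> nat -> Prop) :
  (forall x B B', (B <= B')%N -> P x B -> P x B') ->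
  (forall x, exists B, P x B) -> exists B, forall x, P x B.
Proof.
move=> mon /fin_all_exists [f Hf]; exists (\max_x f x) => x.
by apply: (mon x (f x)) => //; apply: leq_bigmax.
Qed.

Lemma antichain_bound (n : nat) (D : {set 'I_n}) (A : set ('I_n -> nat)) :
  (forall a b, A a -> A b -> (forall i, i \in D -> (a i <= b i)%N) ->
     forall i, i \in D -> a i = b i) ->
  exists B, forall a, A a -> forall i, i \in D -> (a i <= B)%N.
Proof.
have [k Hk] : exists k, (#|D| < k)%N by exists #|D|.+1.
elim: k D A Hk => [//|k IH] D A Hk Hanti.
have [[a0 Aa0]|nA] := pselect (exists a, A a); last first.
  by exists 0%N => a Aa; exfalso; apply: nA; exists a.
pose N := (\max_i a0 i).+1.
have a0N i : (a0 i < N)%N by rewrite ltnS; apply: leq_bigmax.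
pose P := (fun (x : ('I_n * 'I_N)%type) B => x.1 \in D -> forall b, A b -> b x.1 = val x.2 ->
     forall j, j \in D :\ x.1 -> (b j <= B)%N).
have Pmon : forall x B B', (B <= B')%N -> P x B -> P x B'.
  move=> x B B' BB' H xD b Ab bx j jD; exact: leq_trans (H xD b Ab bx j jD) BB'.
have Pex : forall x, exists B, P x B.
  case=> i c; rewrite /P /=.
  have [iD|niD] := boolP (i \in D); last by exists 0%N.
  have Hk' : (#|D :\ i| < k)%N by rewrite (cardsD1 i D) iD add1n ltnS in Hk.
  have Ha' : forall a b, [set b | A b /\ b i = val c] a -> [set b | A b /\ b i = val c] b ->
    (forall l, l \in D :\ i -> (a l <= b l)%N) -> forall l, l \in D :\ i -> a l = b l.
    move=> a b [Aa ai] [Ab bi] Hab j jD.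
    apply: (Hanti a b Aa Ab) => [l lD|]; last by move: jD; rewrite in_setD1 => /andP[].
    have [->|li] := eqVneq l i; first by rewrite ai bi.
    by apply: Hab; rewrite in_setD1 li.
  have [B HB] := IH (D :\ i) [set b | A b /\ b i = val c] Hk' Ha'.
  by exists B => _ b Ab bi j jD; apply: HB.
have [f Hf] := @fin_bound _ P Pmon Pex.
exists (maxn f N) => b Ab j jD.
have [ge|] := boolP [forall i in D, a0 i <= b i]%N.
  have Hc : forall i, i \in D -> (a0 i <= b i)%N by move=> i iD; exact: (forall_inP ge i iD).
  rewrite -(Hanti a0 b Aa0 Ab Hc j jD).
  by apply: leq_trans (ltnW (a0N j)) (leq_maxr _ _).
move/forall_inPn => [i iD]; rewrite -ltnNge => lti.
have bN : (b i < N)%N by apply: ltn_trans lti (a0N i).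
have [->|ji] := eqVneq j i.
  by apply: leq_trans (ltnW bN) (leq_maxr _ _).
apply: leq_trans (leq_maxl _ _).
apply: (Hf (i, Ordinal bN)) => //=.
by rewrite in_setD1 ji.
Qed.
Lemma sum_pred1 (G : zmodType) n (omega : 'I_n -> G) (j : 'I_n) :
  \sum_i omega i *+ (i == j) = omega j.
Proof.
rewrite (bigD1 j) //= eqxx big1 ?addr0 // => i /negbTE ->; exact: mulr0n.
Qed.

Lemma word_sum_count (G : zmodType) n (omega : 'I_n -> G) mu :
  word_sum omega mu = \sum_i omega i *+ count_mem i mu.
Proof.
rewrite /word_sum; elim: mu => [|x mu IH].
  by rewrite big_nil big1 // => i _; rewrite mulr0n.
rewrite big_cons IH /=.
under [RHS]eq_bigr => i _ do rewrite mulrnDr.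
by rewrite big_split /= -(@sum_pred1 _ _ omega x); congr (_ + _); apply: eq_bigr => i _; rewrite eq_sym.
Qed.

Lemma Omega1_closed (G : topologicalZmodType) n (omega : 'I_n -> G) i1 :
  closed (Omega1 omega i1).
Proof. by apply: closed_bigI => S [] . Qed.

Lemma Omega1_combo (G : topologicalZmodType) n (omega : 'I_n -> G) i1 K :
  (0 < K)%N -> omega i1 *+ K = 0 ->
  forall f : 'I_n -> nat, Omega1 omega i1 (\sum_i omega i *+ f i).
Proof.
move=> K0 HK f S [_ sub addS].
have Sm : forall i m, S (omega i *+ m.+1).
  move=> i; elim=> [|m IH]; first by rewrite mulr1n; apply: sub; left; exists i.
  by rewrite mulrS; apply: addS => //; apply: sub; left; exists i.
have S0 : S 0 by rewrite -HK; case: K K0 {HK} => // K _; exact: Sm.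
apply: (big_ind S) => // i _; case: (f i) => [|m]; first by rewrite mulr0n.
exact: Sm.
Qed.

Theorem proposition5p30 (G : topologicalZmodType)
  (Hhaus : hausdorff_space G)
  (Hlc : locally_compact [set: G])
  (Hsc : @second_countable G)
  (n : nat) (Hn : (2 <= n)%N)
  (omega : 'I_n -> G) (i1 : 'I_n) (Hi1 : nat_of_ord i1 = 0%N)
  (HK : exists K : nat, (0 < K)%N /\ omega i1 *+ K = 0)
  (Hj : forall j : 'I_n, j != i1 -> ~ Omega1 omega i1 (- omega j)) :
  forall gamma : G, exists U : set G,
    nbhs gamma U /\ (U `\ gamma) `&` Omega omega = set0.
Proof.
move=> gamma.
have [K [K0 HK0]] := HK.
set S := Omega1 omega i1.
have Scl : closed S := @Omega1_closed _ _ omega i1.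
have Scombo := @Omega1_combo _ _ omega i1 K K0 HK0.
have W0 : \forall d \near (0:G), forall j, j != i1 -> ~ S (d - omega j).
  apply: filter_forall => j.
  have [ji|nji] := eqVneq j i1; first by apply: nearW => d; rewrite ji => /negP.
  have nS : nbhs (- omega j) (~` S).
    by apply: open_nbhs_nbhs; split; [exact: closed_openC | exact: Hj].
  have c1 : (fun d : G => (d, - omega j)) @ (0:G) --> ((0:G), - omega j).
    by apply: (@cvg_pair _ _ _ _ _ _ _ _ _ (fun d : G => d) (fun _ => - omega j)); [exact: cvg_id | exact: cvg_cst].
  have c2 := @add_continuous G (0, - omega j).
  have cont : (fun d : G => d - omega j) @ (0:G) --> 0 - omega j.
    exact: (continuous_comp c1 c2).
  rewrite sub0r in cont.
  have H0 : nbhs (0:G) ((fun d => d - omega j) @^-1` (~` S)) := cont _ nS.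
  move: H0; apply: filterS => d H _; exact: H.
have Hsub : (fun p : G * G => p.1 - p.2) @ (gamma, gamma) --> (0:G).
  have := @sub_continuous G (gamma, gamma); rewrite /continuous_at /= subrr; exact.
have := Hsub _ W0.
case=> [[P1 P2]] /= [nP1 nP2] Psub.
pose U0 := P1 `&` P2.
pose A := [set c : 'I_n -> nat | exists mu, c = (fun i => count_mem i mu) /\ U0 (word_sum omega mu)].
have anti : forall a b, A a -> A b ->
    (forall i, i \in (finset (fun i : 'I_n => i != i1)) -> (a i <= b i)%N) -> forall i, i \in (finset (fun i : 'I_n => i != i1)) -> a i = b i.
  move=> a b [mu [-> [mu1 mu2]]] [nu [-> [nu1 nu2]]] le j jD.
  have jD' : j != i1 by move: jD; rewrite inE.
  apply/eqP; rewrite eqn_leq (le j jD) /= leqNgt; apply/negP => lt.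
  have := Psub (word_sum omega nu, word_sum omega mu) (conj nu1 mu2) j jD'; apply => /=.
  have E : word_sum omega nu - word_sum omega mu - omega j = \sum_i omega i *+
      (if i == i1 then count_mem i1 nu + count_mem i1 mu * K.-1
       else count_mem i nu - count_mem i mu - (i == j))%N.
    apply/eqP; rewrite subr_eq subr_eq; apply/eqP.
    rewrite !word_sum_count -(@sum_pred1 _ _ omega j) -!big_split /=; apply: eq_bigr => i _.
    rewrite -!mulrnDr.
    case: eqVneq => [->|ni].
      have -> : (i1 == j) = false by rewrite eq_sym (negbTE jD').
      rewrite (_ : _ + _ + _ = count_mem i1 nu + K * count_mem i1 mu)%N; last first.
        by rewrite /= addn0 -{2}(prednK K0) mulSn (mulnC (count_mem i1 mu)) -!addnA (addnC (K.-1 * _)).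
      by rewrite mulrnDr mulrnA HK0 mul0rn addr0.
    have lei : (count_mem i mu <= count_mem i nu)%N by apply: le; rewrite inE.
    congr (_ *+ _); case: eqVneq => [eij|nij] /=.
      rewrite -eij in lt; rewrite subnK; [by rewrite subnK | by rewrite subn_gt0].
    by rewrite /= ?subn0 ?addn0 subnK.
  rewrite E; exact: Scombo.
have [B HB] := @antichain_bound _ _ _ anti.
pose M := (maxn B K).+1.
pose v (h : {ffun 'I_n -> 'I_M}) : G := \sum_i omega i *+ h i.
have Hrep : forall mu, U0 (word_sum omega mu) ->
    exists h : {ffun 'I_n -> 'I_M}, word_sum omega mu = v h.
  move=> mu Umu.
  have hB := HB (fun i => count_mem i mu) (ex_intro _ mu (conj erefl Umu)).
  pose g i := if i == i1 then (count_mem i1 mu %% K)%N else count_mem i mu.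
  have gM : forall i, (g i < M)%N.
    move=> i; rewrite /g; case: eqVneq => [_|ni]; rewrite ltnS.
      exact: leq_trans (ltnW (ltn_pmod _ K0)) (leq_maxr _ _).
    apply: leq_trans (hB i _) (leq_maxl _ _); by rewrite inE.
  exists [ffun i => Ordinal (gM i)]; rewrite word_sum_count /v; apply: eq_bigr => i _.
  rewrite ffunE /= /g; case: eqVneq => [->|] //.
  by rewrite {1}(divn_eq (count_mem i1 mu) K) mulrnDr mulnC mulrnA HK0 mul0rn add0r.
exists (U0 `&` [set z | forall h, v h != gamma -> z != v h]).
split.
  apply: filterI; first exact: filterI.
  apply: filter_forall => h.
  have [->|ne] := eqVneq (v h) gamma; first by apply: nearW => z; move/negP.
  have gv : gamma != v h by rewrite eq_sym.
  have [A0 [oA gA vA]] := hausdorff_accessible Hhaus gv.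
  have : nbhs gamma A0 by apply: open_nbhs_nbhs; split => //; move: gA; rewrite inE.
  apply: filterS => z Az _; apply/eqP => zv; move: vA; rewrite inE /= -zv; exact.
apply/seteqP; split => z //= [[[U0z Hz] zng] [mu zmu]].
have U0mu : U0 (word_sum omega mu) by rewrite -zmu.
have [h vh] := Hrep mu U0mu.
have [vg|vng] := eqVneq (v h) gamma.
  by apply: zng; rewrite zmu vh vg.
by move: (Hz h vng); rewrite zmu vh eqxx.
Qed.
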